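(* Let $E$ be a real affine space of finite dimension, let $\mathcal P$ be a Yao-Yao partition of $E$ and let $x$ be its center. Then every affine half-space of $E$ of the form $\{y\in E: \ell(y)\ge 0\}$, with $\ell$ an affine form on $E$ satisfying $\ell(x)\ge 0$, contains an element of $\mathcal P$.
   Context: $\vec E$ denotes the vector space associated with $E$. A partition of $E$ is a collection $\mathcal P$ of subsets of $E$ with $\bigcup\mathcal P=E$ such that the interiors of any two distinct elements of $\mathcal P$ are disjoint. Yao-Yao partitions and their centers are defined by induction on the dimension: if $E=\{x\}$ has dimension $0$, the Yao-Yao partition of $E$ is $\{\{x\}\}$, with center $x$. If $\dim E=n\ge 1$, $\mathcal P$ is a Yao-Yao partition of $E$ with center $x$ if there exist an affine hyperplane $F$ of $E$, a vector $v\in\vec E\setminus\vec F$ and two Yao-Yao partitions $\mathcal P_1,\mathcal P_{-1}$ of $F$ having the same center $x$, such that $\mathcal P=\{A+\mathbb R_- v : A\in\mathcal P_{-1}\}\cup\{A+\mathbb R_+ v: A\in\mathcal P_1\}$. *)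

(* Defs.v *)
From HB Require Import structures.
From mathcomp Require Import all_boot all_order all_algebra.
From mathcomp Require Import classical_sets reals.
Set Implicit Arguments. Unset Strict Implicit. Unset Printing Implicit Defensive.
Import Order.TTheory GRing.Theory Num.Theory.
Local Open Scope ring_scope.
Local Open Scope classical_set_scope.

(* A finite-dimensional real affine space of dimension n is modelled by
   'rV[R]_n.  An affine hyperplane F of 'rV_(n.+1) is parametrized by an
   injective affine map  phi z = a + z *m L  from 'rV_n (L of full row rank n);
   Yao-Yao partitions of F are transported from 'rV_n along phi. *)

Definition aff_param (R : realType) n (a : 'rV[R]_n.+1) (L : 'M[R]_(n, n.+1))
  (z : 'rV[R]_n) : 'rV[R]_n.+1 := a + z *m L.

(* A + R_- v  and  A + R_+ v  (A subset of F, given as phi(A')) *)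
Definition ray_minus (R : realType) n a (L : 'M[R]_(n, n.+1)) (v : 'rV[R]_n.+1)
  (A : set 'rV[R]_n) : set 'rV[R]_n.+1 :=
  [set y | exists z t, A z /\ t <= 0 /\ y = aff_param a L z + t *: v].

Definition ray_plus (R : realType) n a (L : 'M[R]_(n, n.+1)) (v : 'rV[R]_n.+1)
  (A : set 'rV[R]_n) : set 'rV[R]_n.+1 :=
  [set y | exists z t, A z /\ 0 <= t /\ y = aff_param a L z + t *: v].

Inductive YaoYao (R : realType) : forall n, set (set 'rV[R]_n) -> 'rV[R]_n -> Prop :=
| YaoYao0 (x : 'rV[R]_0) : YaoYao [set [set x]] x
| YaoYaoS n (a : 'rV[R]_n.+1) (L : 'M[R]_(n, n.+1)) (v : 'rV[R]_n.+1)
    (P1 Pm1 : set (set 'rV[R]_n)) (c : 'rV[R]_n) :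
    row_free L ->                      (* F = a + rowspace L is a hyperplane *)
    ~~ (v <= L)%MS ->                  (* v not in the direction of F *)
    YaoYao P1 c -> YaoYao Pm1 c ->
    YaoYao ([set ray_minus a L v A | A in Pm1] `|` [set ray_plus a L v A | A in P1])
           (aff_param a L c).

Definition affine_form (R : realType) n (l : 'rV[R]_n -> R) : Prop :=
  exists (u : 'cV[R]_n) (b : R), forall y, l y = (y *m u) 0 0 + b.

(* Main.v *)
Require Import Defs.
From HB Require Import structures.
From mathcomp Require Import all_boot all_order all_algebra.
From mathcomp Require Import classical_sets reals.
Import Order.TTheory GRing.Theory Num.Theory.
Local Open Scope ring_scope.
Local Open Scope classical_set_scope.

Lemma aux (R : realType) (n : nat) (P : set (set 'rV[R]_n))
  (x : 'rV[R]_n) : YaoYao P x -> forall (l : 'rV[R]_n -> R),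
  affine_form l -> 0 <= l x ->
  exists A, P A /\ A `<=` [set y | 0 <= l y].
Proof.
elim=> {n P x} [x|n a L v P1 Pm1 c _ _ _ IH1 _ IHm1] l [u [b lE]] lx.
  by exists [set x]; split => // y ->.
have lin : forall w (t : R), l (w + t *: v) = l w + t * (v *m u) 0 0.
  by move=> w t; rewrite !lE mulmxDl -scalemxAl !mxE addrAC.
have affl' : affine_form (fun z => l (aff_param a L z)).
  exists (L *m u), ((a *m u) 0 0 + b) => z.
  by rewrite lE /aff_param mulmxDl mulmxA !mxE addrCA addrA.
have [s0|s0] := leP 0 ((v *m u) 0 0).
  have [A [PA HA]] := IH1 _ affl' lx.
    exists (ray_plus a L v A); split; first by right; exists A => //.
  move=> y [z [t [Az [t0 ->]]]] /=; rewrite lin.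
  by apply: addr_ge0; [exact: HA|exact: mulr_ge0].
have [A [PA HA]] := IHm1 _ affl' lx.
exists (ray_minus a L v A); split; first by left; exists A => //.
move=> y [z [t [Az [t0 ->]]]] /=; rewrite lin.
apply: addr_ge0; first exact: HA.
by apply: mulr_le0 => //; exact: ltW.
Qed.

Theorem proposition4 (R : realType) (n : nat) (P : set (set 'rV[R]_n))
  (x : 'rV[R]_n) (l : 'rV[R]_n -> R) :
  YaoYao P x ->
  affine_form l ->
  (exists y z, l y != l z) ->
  0 <= l x ->
  exists A, P A /\ A `<=` [set y | 0 <= l y].
Proof.
by move=> YP al _ lx; exact: aux YP l al lx.
Qed.
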